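(* Let $m\ge2$ be such that $m+1$ is a power of $2$, and let $f$ be the two-digit base-$m$ Kaprekar map on $X=\{0,\dots,m^2-1\}$. Then $K(x)=\{0\}$ for every $x\in X$.
   Context: For an integer $m\ge2$, $X=\{0,1,\dots,m^2-1\}$, each element written with exactly two base-$m$ digits (leading zeros allowed); $f(x)=D(x)-A(x)$ where $D(x)$ (resp. $A(x)$) has the digits of $x$ in nonincreasing (resp. nondecreasing) order. The step $S(x)$ is the least $s\ge0$ such that $f^{s+t}(x)=f^s(x)$ for some $t\ge1$; $T(x)$ is the least $t\ge1$ with $f^{S(x)+t}(x)=f^{S(x)}(x)$; the fixed set of $x$ is $K(x)=\{f^{S(x)+i}(x):0\le i<T(x)\}$. *)

(* Defs.v *)
From mathcomp Require Import all_boot.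
Set Implicit Arguments. Unset Strict Implicit. Unset Printing Implicit Defensive.

Definition desc_num (m x : nat) : nat :=
  maxn (x %/ m) (x %% m) * m + minn (x %/ m) (x %% m).
Definition asc_num (m x : nat) : nat :=
  minn (x %/ m) (x %% m) * m + maxn (x %/ m) (x %% m).
Definition kaprekar (m x : nat) : nat := desc_num m x - asc_num m x.

Definition eventually_periodic_from (m x s : nat) : Prop :=
  exists t, 0 < t /\ iter (s + t) (kaprekar m) x = iter s (kaprekar m) x.

Definition is_step (m x s : nat) : Prop :=
  eventually_periodic_from m x s /\
  forall s', eventually_periodic_from m x s' -> s <= s'.

Definition is_period (m x s t : nat) : Prop :=
  0 < t /\ iter (s + t) (kaprekar m) x = iter s (kaprekar m) x /\
  forall t', 0 < t' -> iter (s + t') (kaprekar m) x = iter s (kaprekar m) x ->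
             t <= t'.

Definition fixed_set (m x s t : nat) : pred nat :=
  [pred y | y \in [seq iter (s + i) (kaprekar m) x | i <- iota 0 t]].

(* Main.v *)
Require Import Defs.
From mathcomp Require Import all_boot zify.
Lemma kap_eq m x : kaprekar m x = (maxn (x %/ m) (x %% m) - minn (x %/ m) (x %% m)) * (m-1).
Proof. rewrite /kaprekar /desc_num /asc_num.
move: (x %/ m) (x %% m) => a b. case: (leqP a b) => h.
- nia.
- nia.
Qed.
Lemma kap_d m d : 0 < d -> d < m -> kaprekar m (d*(m-1)) = ((m.+1 - d*2) + (d*2 - m.+1)) * (m-1).
Proof. move=> d0 dm. rewrite kap_eq.
have E: d * (m-1) = (d-1)*m + (m-d) by nia.
have q: (d*(m-1)) %/ m = d-1 by rewrite E divnMDl ?divn_small; lia.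
have r: (d*(m-1)) %% m = m-d by rewrite E modnMDl modn_small; lia.
rewrite q r. congr (_ * _). lia.
Qed.
Definition g m d := if d == 0 then 0 else (m.+1 - d*2) + (d*2 - m.+1).

Lemma g_lt m d : 2 <= m -> d < m -> g m d < m.
Proof. rewrite /g; case: eqP => h; lia. Qed.

Lemma kap_g m d : d < m -> kaprekar m (d*(m-1)) = g m d * (m-1).
Proof. move=> dm; rewrite /g; case: eqP => [->|/eqP d0].
- by rewrite kap_eq div0n mod0n.
- rewrite kap_d //; lia.
Qed.

Lemma iter_kap m x n : 2 <= m -> x < m^2 ->
  iter n.+1 (kaprekar m) x = iter n (g m) (maxn (x %/ m) (x %% m) - minn (x %/ m) (x %% m)) * (m-1)
  /\ iter n (g m) (maxn (x %/ m) (x %% m) - minn (x %/ m) (x %% m)) < m.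
Proof. move=> m2; rewrite -mulnn => xm. elim: n => [|n [IH1 IH2]].
- split; first by rewrite /= kap_eq.
  have : x %/ m < m by rewrite ltn_divLR; [exact: xm| lia].
  have : x %% m < m by rewrite ltn_mod; lia.
  move: (x %/ m) (x %% m) => a b /=; lia.
- rewrite iterS IH1 kap_g // iterS; split=> //. exact: g_lt.
Qed.

Lemma g_dvd m k d i : 2 <= m -> m.+1 = 2^k -> d < m -> i < k -> 2^i %| d -> 2^i.+1 %| g m d.
Proof. move=> m2 mk dm ik hd. rewrite /g; case: eqP => // _.
have h1 : 2^i.+1 %| m.+1 by rewrite mk; apply: dvdn_exp2l.
have h2 : 2^i.+1 %| d*2 by rewrite expnSr dvdn_pmul2r.
by rewrite dvdn_add // dvdn_sub.
Qed.

Lemma g_zero m k d : 2 <= m -> m.+1 = 2^k -> d < m -> iter k (g m) d = 0.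
Proof. move=> m2 mk dm.
have H : forall i, i <= k -> 2^i %| iter i (g m) d /\ iter i (g m) d < m.
  elim=> [|i IH] hi; first by rewrite dvd1n.
  have [h1 h2] := IH (ltnW hi).
  rewrite iterS; split; [apply: (@g_dvd m k _ i m2 mk h2 hi h1) | exact: g_lt].
have [h1 h2] := H k (leqnn k).
apply/eqP; apply: contraTT h1 => nz.
apply/negP => /(dvdn_leq _); rewrite lt0n nz => /(_ isT). lia.
Qed.

Lemma zero_after m k x n : 2 <= m -> m.+1 = 2^k -> x < m^2 -> k < n -> iter n (kaprekar m) x = 0.
Proof. move=> m2 mk xm kn.
have -> : n = (n - k.+1) + k.+1 by lia.
rewrite iterD. have [_ h] := @iter_kap m x 0 m2 xm. have [-> _] := @iter_kap m x k m2 xm. rewrite (@g_zero m k _ m2 mk h) mul0n.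
elim: (n - k.+1) => // j IH. by rewrite iterS IH kap_eq div0n mod0n.
Qed.

Theorem corollary3p3p2 (m : nat) :
  2 <= m -> (exists k, m.+1 = 2 ^ k) ->
  forall x, x < m ^ 2 ->
  exists s t, is_step m x s /\ is_period m x s t /\
    forall y, fixed_set m x s t y <-> y = 0.
Proof.
move=> m2 [k mk] x xm.
have Z := @zero_after m k x _ m2 mk xm.
have ex : exists s, iter s (kaprekar m) x == 0 by exists k.+1; rewrite Z.
have f0 : kaprekar m 0 = 0 by rewrite kap_eq div0n mod0n.
set s := ex_minn ex. case: (ex_minnP ex) => s0 /eqP Hs0 Hmin.
have per : forall s', eventually_periodic_from m x s' -> iter s' (kaprekar m) x = 0.
  move=> s' [t [t0 ht]].
  have P : forall n, iter (s' + t * n) (kaprekar m) x = iter s' (kaprekar m) x.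
    elim=> [|n IH]; first by rewrite muln0 addn0.
    rewrite mulnS addnCA iterD IH -iterD addnC ht //.
  by rewrite -(P k.+1) Z //; nia.
have per0 : eventually_periodic_from m x s0 by exists 1; split=> //; rewrite addn1 iterS Hs0.
exists s0, 1; split; [split=> // s' /per /eqP; exact: Hmin|].
split; first by split=> //; split; [rewrite addn1 iterS Hs0| move=> t' ->].
move=> y; rewrite /fixed_set /= addn0 Hs0. rewrite inE.
by split=> [/eqP|->].
Qed.
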